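(* Let $(G_1,\oplus_1,\otimes_1)$ and $(G_2,\oplus_2,\otimes_2)$ be generalized gyrovector spaces (GGV's), with gyrometrics $\varrho_1$ and $\varrho_2$ respectively. Suppose $T:G_1\to G_2$ is a surjection that preserves the gyrometric, i.e. $\varrho_2(T\mathbf a,T\mathbf b)=\varrho_1(\mathbf a,\mathbf b)$ for all $\mathbf a,\mathbf b\in G_1$. Then $T$ preserves gyromidpoints: for all $\mathbf a,\mathbf b\in G_1$, \[\mathbf p_2(T\mathbf a,T\mathbf b)=T\,\mathbf p_1(\mathbf a,\mathbf b),\] where $\mathbf p_i$ denotes the gyromidpoint in $G_i$.
   Context: A gyrogroup $(G,\oplus)$ is a set with a binary operation $\oplus$ such that: there is $e\in G$ with $e\oplus a=a$ for all $a$; each $a$ has $\ominus a$ with $\ominus a\oplus a=e$; for all $a,b$ there is an automorphism $\mathrm{gyr}[a,b]$ of $(G,\oplus)$ with $a\oplus(b\oplus c)=(a\oplus b)\oplus\mathrm{gyr}[a,b]c$ for all $c$ (left gyroassociativity); and $\mathrm{gyr}[a,b]=\mathrm{gyr}[a\oplus b,b]$ (left loop property). It is gyrocommutative if $a\oplus b=\mathrm{gyr}[a,b](b\oplus a)$. Write $a\ominus b=a\oplus(\ominus b)$. A generalized gyrovector space (GGV) $(G,\oplus,\otimes)$ consists of a gyrocommutative gyrogroup $(G,\oplus)$, a map $\otimes:\mathbb R\times G\to G$, and an injection $\phi$ of $G$ into a real normed space $(V,\|\cdot\|)$ such that for all $a,b,u,v\in G$ and $r,r_1,r_2\in\mathbb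 R$: (GGV0) $\|\phi(\mathrm{gyr}[u,v]a)\|=\|\phi(a)\|$; (GGV1) $1\otimes a=a$; (GGV2) $(r_1+r_2)\otimes a=(r_1\otimes a)\oplus(r_2\otimes a)$; (GGV3) $(r_1r_2)\otimes a=r_1\otimes(r_2\otimes a)$; (GGV4) $\phi(|r|\otimes a)/\|\phi(r\otimes a)\|=\phi(a)/\|\phi(a)\|$ for $a\neq e$, $r\neq 0$; (GGV5) $\mathrm{gyr}[u,v](r\otimes a)=r\otimes\mathrm{gyr}[u,v]a$; (GGV6) $\mathrm{gyr}[r_1\otimes v,r_2\otimes v]$ is the identity map; (GGVV) the set $\|\phi(G)\|=\{\pm\|\phi(a)\|:a\in G\}\subset\mathbb R$ is a real one-dimensional vector space under some addition $\oplus'$ and scalar multiplication $\otimes'$; (GGV7) $\|\phi(r\otimes a)\|=|r|\otimes'\|\phi(a)\|$; (GGV8) $\|\phi(a\oplus b)\|\le\|\phi(a)\|\oplus'\|\phi(b)\|$ (usual order of $\mathbb R$). The gyrometric of a GGV is $\varrho(a,b)=\|\phi(\ominus a\oplus b)\|$. The gyromidpoint of $a,b$ is $\mathbf p(a,b)=\tfrac12\otimes(a\boxplus b)$, where $a\boxplus b=a\oplus\mathrm{gyr}[a,\ominus b]b$ is the cooperation. *)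

(* Defs.v *)
From Stdlib Require Import Reals.
Open Scope R_scope.

Record NormedSpace := {
  nv_car :> Type;
  nv_add : nv_car -> nv_car -> nv_car;
  nv_zero : nv_car;
  nv_opp : nv_car -> nv_car;
  nv_scal : R -> nv_car -> nv_car;
  nv_norm : nv_car -> R;
  nv_addA : forall x y z, nv_add x (nv_add y z) = nv_add (nv_add x y) z;
  nv_addC : forall x y, nv_add x y = nv_add y x;
  nv_add0 : forall x, nv_add x nv_zero = x;
  nv_addN : forall x, nv_add x (nv_opp x) = nv_zero;
  nv_scalA : forall r s x, nv_scal r (nv_scal s x) = nv_scal (r * s) x;
  nv_scal1 : forall x, nv_scal 1 x = x;
  nv_scalDr : forall r x y, nv_scal r (nv_add x y) = nv_add (nv_scal r x) (nv_scal r y);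
  nv_scalDl : forall r s x, nv_scal (r + s) x = nv_add (nv_scal r x) (nv_scal s x);
  nv_norm_eq0 : forall x, nv_norm x = 0 -> x = nv_zero;
  nv_normZ : forall r x, nv_norm (nv_scal r x) = Rabs r * nv_norm x;
  nv_normD : forall x y, nv_norm (nv_add x y) <= nv_norm x + nv_norm y
}.

(* The set ||phi(G)|| = { +- ||phi a|| : a in G } and the requirement that it
   is a real one-dimensional vector space under addp (= (+)') and mulp (= (x)'). *)
Definition one_dim_real_vs (S : R -> Prop) (addp : R -> R -> R) (mulp : R -> R -> R) : Prop :=
  (forall x y, S x -> S y -> S (addp x y)) /\
  (forall r x, S x -> S (mulp r x)) /\
  exists z, S z /\
  (forall x y w, S x -> S y -> S w -> addp x (addp y w) = addp (addp x y) w) /\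
  (forall x y, S x -> S y -> addp x y = addp y x) /\
  (forall x, S x -> addp x z = x) /\
  (forall x, S x -> exists y, S y /\ addp x y = z) /\
  (forall r s x, S x -> mulp r (mulp s x) = mulp (r * s) x) /\
  (forall x, S x -> mulp 1 x = x) /\
  (forall r x y, S x -> S y -> mulp r (addp x y) = addp (mulp r x) (mulp r y)) /\
  (forall r s x, S x -> mulp (r + s) x = addp (mulp r x) (mulp s x)) /\
  (exists v, S v /\ v <> z /\ forall x, S x -> exists r, x = mulp r v).

Record GGV (N : NormedSpace) := {
  g_car :> Type;
  g_op : g_car -> g_car -> g_car;
  g_e : g_car;
  g_inv : g_car -> g_car;
  g_gyr : g_car -> g_car -> g_car -> g_car;
  g_mul : R -> g_car -> g_car;
  g_phi : g_car -> nv_car N;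
  g_addp : R -> R -> R;
  g_mulp : R -> R -> R;
  g_left_id : forall a, g_op g_e a = a;
  g_left_inv : forall a, g_op (g_inv a) a = g_e;
  g_gyr_hom : forall a b x y, g_gyr a b (g_op x y) = g_op (g_gyr a b x) (g_gyr a b y);
  g_gyr_bij : forall a b, exists h : g_car -> g_car,
      (forall x, h (g_gyr a b x) = x) /\ (forall x, g_gyr a b (h x) = x);
  g_gyroassoc : forall a b c, g_op a (g_op b c) = g_op (g_op a b) (g_gyr a b c);
  g_loop : forall a b c, g_gyr a b c = g_gyr (g_op a b) b c;
  g_gyrocomm : forall a b, g_op a b = g_gyr a b (g_op b a);
  g_phi_inj : forall a b, g_phi a = g_phi b -> a = b;
  ggv0 : forall u v a, nv_norm N (g_phi (g_gyr u v a)) = nv_norm N (g_phi a);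
  ggv1 : forall a, g_mul 1 a = a;
  ggv2 : forall r1 r2 a, g_mul (r1 + r2) a = g_op (g_mul r1 a) (g_mul r2 a);
  ggv3 : forall r1 r2 a, g_mul (r1 * r2) a = g_mul r1 (g_mul r2 a);
  ggv4 : forall r a, a <> g_e -> r <> 0 ->
      nv_scal N (/ nv_norm N (g_phi (g_mul r a))) (g_phi (g_mul (Rabs r) a))
      = nv_scal N (/ nv_norm N (g_phi a)) (g_phi a);
  ggv5 : forall u v r a, g_gyr u v (g_mul r a) = g_mul r (g_gyr u v a);
  ggv6 : forall r1 r2 v x, g_gyr (g_mul r1 v) (g_mul r2 v) x = x;
  ggvV : one_dim_real_vs
      (fun x => exists a, x = nv_norm N (g_phi a) \/ x = - nv_norm N (g_phi a))
      g_addp g_mulp;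
  ggv7 : forall r a, nv_norm N (g_phi (g_mul r a)) = g_mulp (Rabs r) (nv_norm N (g_phi a));
  ggv8 : forall a b, nv_norm N (g_phi (g_op a b))
                     <= g_addp (nv_norm N (g_phi a)) (nv_norm N (g_phi b))
}.

Arguments g_op {N} g _ _.
Arguments g_inv {N} g _.
Arguments g_gyr {N} g _ _ _.
Arguments g_mul {N} g _ _.
Arguments g_phi {N} g _.

Definition gyrometric {N : NormedSpace} (G : GGV N) (a b : G) : R :=
  nv_norm N (g_phi G (g_op G (g_inv G a) b)).

Definition coop {N : NormedSpace} (G : GGV N) (a b : G) : G :=
  g_op G a (g_gyr G a (g_inv G b) b).

Definition gyromidpoint {N : NormedSpace} (G : GGV N) (a b : G) : G :=
  g_mul G (1 / 2) (coop G a b).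

(* Main.v *)
Require Import Defs.
From Stdlib Require Import Reals Lra Classical ClassicalEpsilon.
Open Scope R_scope.

Notation "a ⊕ b" := (g_op _ a b) (at level 50, left associativity).
Notation "⊖ a" := (g_inv _ a) (at level 35, right associativity).
Notation gy := (g_gyr _).
Notation nrm G x := (nv_norm _ (g_phi G x)).
Notation sc := (g_mul _).

Lemma L0 {N} (G : GGV N) (a x y : G) : a ⊕ x = a ⊕ y -> x = y.
Proof.
  intro H.
  pose proof (g_gyroassoc N G (⊖a) a x) as E1.
  pose proof (g_gyroassoc N G (⊖a) a y) as E2.
  rewrite g_left_inv, g_left_id in E1, E2. rewrite H in E1.
  rewrite E1 in E2.
  destruct (g_gyr_bij N G (⊖a) a) as [h [Hh _]].
  rewrite <- (Hh x), <- (Hh y), E2. reflexivity.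
Qed.

Lemma gyr_e_l {N} (G : GGV N) (a x : G) : gy (g_e N G) a x = x.
Proof.
  pose proof (g_gyroassoc N G (g_e N G) a x) as E.
  rewrite !g_left_id in E. symmetry. exact (L0 G a _ _ E).
Qed.

Lemma LC {N} (G : GGV N) (a x : G) : ⊖a ⊕ (a ⊕ x) = x.
Proof.
  rewrite g_gyroassoc, g_left_inv, g_left_id, g_loop, g_left_inv.
  apply gyr_e_l.
Qed.

Lemma rid {N} (G : GGV N) (a : G) : a ⊕ g_e N G = a.
Proof.
  apply (L0 G (⊖a)). rewrite LC. symmetry; apply g_left_inv.
Qed.

Lemma mul0 {N} (G : GGV N) (x : G) : sc 0 x = g_e N G.
Proof.
  apply (L0 G (sc 0 x)). rewrite rid, <- ggv2. f_equal. ring.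
Qed.

Lemma inv_mul {N} (G : GGV N) (x : G) : ⊖x = sc (-1) x.
Proof.
  assert (H : x ⊕ sc (-1) x = g_e N G).
  { rewrite <- (ggv1 N G x) at 1. rewrite <- ggv2. replace (1 + -1) with 0 by ring. apply mul0. }
  pose proof (LC G x (sc (-1) x)) as E. rewrite H, rid in E. exact E.
Qed.

Lemma rinv {N} (G : GGV N) (x : G) : x ⊕ ⊖x = g_e N G.
Proof.
  rewrite inv_mul. rewrite <- (ggv1 N G x) at 1. rewrite <- ggv2.
  replace (1 + -1) with 0 by ring. apply mul0.
Qed.

Lemma invinv {N} (G : GGV N) (x : G) : ⊖ ⊖ x = x.
Proof.
  rewrite !inv_mul, <- ggv3. replace (-1 * -1) with 1 by ring. apply ggv1.
Qed.

Lemma LC' {N} (G : GGV N) (a x : G) : a ⊕ (⊖a ⊕ x) = x.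
Proof. rewrite <- (invinv G a) at 1. apply LC. Qed.

Lemma inv_e {N} (G : GGV N) : ⊖ g_e N G = g_e N G.
Proof. rewrite <- (rid G (⊖ g_e N G)). apply g_left_inv. Qed.

Lemma gyr_inv {N} (G : GGV N) (a b x : G) : gy a b (⊖x) = ⊖ (gy a b x).
Proof. rewrite !inv_mul. apply ggv5. Qed.

Lemma gyr_e {N} (G : GGV N) (a b : G) : gy a b (g_e N G) = g_e N G.
Proof. rewrite <- (mul0 G a), ggv5, !mul0. reflexivity. Qed.

Lemma rinv_uniq {N} (G : GGV N) (x y : G) : x ⊕ y = g_e N G -> y = ⊖x.
Proof. intro H. rewrite <- (LC G x y), H, rid. reflexivity. Qed.

Lemma inv_op {N} (G : GGV N) (a b : G) : ⊖(a ⊕ b) = gy a b (⊖b ⊕ ⊖a).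
Proof.
  symmetry. apply rinv_uniq. rewrite <- g_gyroassoc, LC', rinv. reflexivity.
Qed.

Lemma two_mul {N} (G : GGV N) (x : G) : sc 2 x = x ⊕ x.
Proof. replace 2 with (1+1) by ring. rewrite ggv2, ggv1. reflexivity. Qed.

Lemma half_two {N} (G : GGV N) (x : G) : sc 2 (sc (1/2) x) = x.
Proof. rewrite <- ggv3. replace (2 * (1/2)) with 1 by field. apply ggv1. Qed.

Lemma two_half {N} (G : GGV N) (x : G) : sc (1/2) (sc 2 x) = x.
Proof. rewrite <- ggv3. replace (1/2 * 2) with 1 by field. apply ggv1. Qed.

Lemma gyr_id_same {N} (G : GGV N) (d x : G) : gy d d x = x.
Proof. pose proof (ggv6 N G 1 1 d x) as H. rewrite ggv1 in H. exact H. Qed.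
Lemma Nlem {N} (G : GGV N) (a b y : G) :
  (a ⊕ b) ⊕ ⊖ gy a b b = a /\ gy a (⊖ gy a b b) (gy a b y) = y.
Proof.
  assert (key : forall y, a ⊕ y = ((a⊕b) ⊕ ⊖ gy a b b) ⊕ gy (a⊕b) (⊖ gy a b b) (gy a b y)).
  { intro y0. rewrite <- (LC' G b y0) at 1. rewrite g_gyroassoc, g_gyr_hom, gyr_inv.
    rewrite g_gyroassoc. reflexivity. }
  assert (H1 : (a ⊕ b) ⊕ ⊖ gy a b b = a).
  { pose proof (key (g_e N G)) as K. rewrite !gyr_e, !rid in K. symmetry; exact K. }
  split; [exact H1|].
  pose proof (key y) as K. rewrite H1 in K.
  apply L0 in K.
  assert (HG : forall x, gy (a⊕b) (⊖ gy a b b) x = gy a (⊖ gy a b b) x)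
    by (intro x; rewrite g_loop, H1; reflexivity).
  rewrite HG in K. symmetry; exact K.
Qed.

Lemma Mlem {N} (G : GGV N) (a b y : G) : gy b (a ⊕ b) (gy a b y) = y.
Proof.
  pose proof (g_gyroassoc N G (⊖a) (a⊕b) (gy a b y)) as E.
  rewrite LC, <- g_gyroassoc, LC in E.
  apply L0 in E.
  assert (HG : forall x, gy (⊖a) (a⊕b) x = gy b (a⊕b) x)
    by (intro x; rewrite g_loop, LC; reflexivity).
  rewrite HG in E. symmetry; exact E.
Qed.

Lemma gyr_inv_law {N} (G : GGV N) (x y z : G) : gy y x (gy x y z) = z.
Proof.
  set (a := x). set (c := y).
  set (c'' := ⊖ gy a c c).
  assert (Hs : (a ⊕ c'') ⊕ c = a).
  { destruct (Nlem G a c c) as [_ H2].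
    rewrite <- H2 at 1. rewrite <- g_gyroassoc. unfold c''. rewrite g_left_inv, rid. reflexivity. }
  set (s := a ⊕ c'') in *.
  set (b := ⊖a ⊕ s).
  assert (Hab : a ⊕ b = s) by (unfold b; apply LC').
  destruct (Nlem G a b (g_e N G)) as [H1 _].
  rewrite Hab in H1.
  assert (H1' : s ⊕ ⊖ gy a b b = s ⊕ c) by (rewrite H1, Hs; reflexivity).
  apply L0 in H1'. clear H1. rename H1' into H1.
  pose proof (Mlem G s (⊖ gy a b b) z) as M.
  rewrite H1 in M. rewrite Hs in M.
  assert (HG : forall w, gy s c w = gy a c w) by (intro w; rewrite g_loop, Hs; reflexivity).
  rewrite HG in M. exact M.
Qed.

Lemma AIP {N} (G : GGV N) (a b : G) : ⊖(a ⊕ b) = ⊖a ⊕ ⊖b.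
Proof.
  rewrite g_gyrocomm at 1. rewrite <- gyr_inv, inv_op. apply gyr_inv_law.
Qed.

Lemma coop_eq {N} (G : GGV N) (a b : G) : gy a (⊖b) b = (⊖a ⊕ b) ⊕ a.
Proof.
  assert (H : (a ⊕ ⊖b) ⊕ gy a (⊖b) b = a).
  { rewrite <- g_gyroassoc, g_left_inv, rid. reflexivity. }
  rewrite <- (LC G (a ⊕ ⊖b) (gy a (⊖b) b)), H, AIP, invinv. reflexivity.
Qed.

Lemma midpoint_eq {N} (G : GGV N) (a b : G) :
  gyromidpoint G a b = a ⊕ sc (1/2) (⊖a ⊕ b).
Proof.
  unfold gyromidpoint, coop. rewrite coop_eq.
  set (c := ⊖a ⊕ b). set (d := sc (1/2) c).
  assert (Hc : d ⊕ d = c) by (unfold d; rewrite <- two_mul; apply half_two).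
  assert (E : a ⊕ (c ⊕ a) = sc 2 (a ⊕ d)).
  { rewrite two_mul. rewrite (g_gyrocomm N G a d) at 2. rewrite <- g_gyroassoc.
    f_equal. rewrite g_gyroassoc, gyr_id_same, Hc. reflexivity. }
  rewrite E. apply two_half.
Qed.
Definition Sp {N} (G : GGV N) (x : R) := exists a : G, x = nrm G a \/ x = - nrm G a.

Lemma vs_facts {N} (G : GGV N) : exists v, Sp G v /\
  (forall x, Sp G x -> exists r, x = g_mulp N G r v) /\
  (forall r s, g_mulp N G r v = g_mulp N G s v -> r = s) /\
  (forall r s, g_addp N G (g_mulp N G r v) (g_mulp N G s v) = g_mulp N G (r+s) v) /\
  (forall r s, g_mulp N G r (g_mulp N G s v) = g_mulp N G (r*s) v).
Proof.
  destruct (ggvV N G) as [Hadd [Hmul [z [Hz [Hassoc [Hcomm [Hid [Hinv [HmA [Hm1 [HdistR [HdistL [v [Hv [Hvz Hspan]]]]]]]]]]]]]]].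
  fold (Sp G) in *.
  exists v. split; [exact Hv|]. split; [exact Hspan|].
  assert (canc : forall x y w, Sp G x -> Sp G y -> Sp G w ->
            g_addp N G x y = g_addp N G x w -> y = w).
  { intros x y w Sx Sy Sw E. destruct (Hinv x Sx) as [x' [Sx' Ex']].
    assert (F : forall y, Sp G y -> g_addp N G x' (g_addp N G x y) = y).
    { intros y0 Sy0. rewrite Hassoc by auto. rewrite (Hcomm x' x) by auto. rewrite Ex'.
      rewrite Hcomm by auto. apply Hid; auto. }
    rewrite <- (F y Sy), <- (F w Sw), E. reflexivity. }
  assert (Sm : forall r, Sp G (g_mulp N G r v)) by (intro r; apply Hmul; exact Hv).
  assert (h0 : g_mulp N G 0 v = z).
  { apply (canc (g_mulp N G 0 v)); auto. rewrite Hid by auto. rewrite <- HdistL by auto.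
    f_equal; ring. }
  assert (mz : forall k, g_mulp N G k z = z).
  { intro k. rewrite <- h0, HmA by auto. f_equal; ring. }
  split.
  { intros r s E. destruct (Req_dec (r - s) 0) as [H|H]; [lra|exfalso].
    assert (E2 : g_mulp N G (r - s) v = z).
    { apply (canc (g_mulp N G s v)); auto. rewrite <- HdistL by auto.
      rewrite Hid by auto. replace (s + (r - s)) with r by ring. exact E. }
    apply Hvz. rewrite <- (Hm1 v Hv). replace 1 with (/ (r - s) * (r - s)) by (field; auto).
    rewrite <- HmA by auto. rewrite E2. apply mz. }
  split.
  - intros r s. rewrite HdistL by auto. reflexivity.
  - intros r s. apply HmA; auto.
Qed.
Lemma Sp_n {N} (G : GGV N) (a : G) : Sp G (nrm G a).
Proof. exists a; left; reflexivity. Qed.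

Lemma nrm_inv {N} (G : GGV N) (x : G) : nrm G (⊖x) = nrm G x.
Proof.
  rewrite inv_mul, ggv7. rewrite <- (ggv1 N G x) at 2. rewrite ggv7.
  f_equal. rewrite Rabs_R1. rewrite Rabs_left; lra.
Qed.

Lemma NZ {N} (G : GGV N) (x : G) : nrm G x = nrm G (g_e N G) -> x = g_e N G.
Proof.
  intro H. destruct (classic (x = g_e N G)) as [|Hx]; [assumption|exfalso].
  destruct (vs_facts G) as [v [Sv [Hspan [Hinj [Hadd Hmul]]]]].
  destruct (Hspan _ (Sp_n G x)) as [al Hal].
  assert (He : nrm G (g_e N G) = g_mulp N G 0 v).
  { rewrite <- (mul0 G x), ggv7, Hal, Hmul. f_equal. rewrite Rabs_R0; ring. }
  assert (al0 : al = 0) by (apply Hinj; rewrite <- Hal, <- He; exact H).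
  assert (H2 : nrm G (sc 2 x) = nrm G x).
  { rewrite ggv7, Hal, Hmul, al0, <- He, <- H, Hal, al0. f_equal; ring. }
  destruct (Req_dec (nrm G x) 0) as [Z|Z].
  - apply Hx. apply g_phi_inj. rewrite (nv_norm_eq0 N _ Z).
    rewrite H in Z. rewrite (nv_norm_eq0 N _ Z). reflexivity.
  - pose proof (ggv4 N G 2 x Hx ltac:(lra)) as E.
    rewrite Rabs_pos_eq in E by lra. rewrite H2 in E.
    apply (f_equal (nv_scal N (nrm G x))) in E.
    rewrite !nv_scalA, Rinv_r, !nv_scal1 in E by exact Z.
    apply g_phi_inj in E. rewrite two_mul in E.
    rewrite <- (rid G x) in E at 3. apply L0 in E. exact (Hx E).
Qed.

Lemma nrm_scal {N} (G : GGV N) v (u : G) al k :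
  (forall r s, g_mulp N G r (g_mulp N G s v) = g_mulp N G (r*s) v) ->
  nrm G u = g_mulp N G al v -> nrm G (sc k u) = g_mulp N G (Rabs k * al) v.
Proof. intros Hmul Hal. rewrite ggv7, Hal, Hmul. reflexivity. Qed.

Lemma MONO {N} (G : GGV N) (u : G) s t : 0 <= s <= t -> nrm G (sc s u) <= nrm G (sc t u).
Proof.
  intro Hst.
  destruct (vs_facts G) as [v [Sv [Hspan [Hinj [Hadd Hmul]]]]].
  destruct (Hspan _ (Sp_n G u)) as [al Hal].
  replace s with ((s+t)/2 + (s-t)/2) at 1 by field.
  rewrite ggv2. eapply Rle_trans; [apply ggv8|].
  rewrite !(nrm_scal G v u al _ Hmul Hal), Hadd.
  rewrite (Rabs_pos_eq ((s+t)/2)) by lra. rewrite (Rabs_left1 ((s-t)/2)) by lra.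
  rewrite (Rabs_pos_eq t) by lra. right. f_equal. field.
Qed.

Lemma GE {N} (G : GGV N) (w : G) : nrm G (g_e N G) <= nrm G w.
Proof.
  rewrite <- (mul0 G w). rewrite <- (ggv1 N G w) at 2. apply MONO. lra.
Qed.

Lemma STRICT {N} (G : GGV N) (u : G) s t : u <> g_e N G -> 0 <= s -> 0 <= t ->
  nrm G (sc s u) = nrm G (sc t u) -> s = t.
Proof.
  intros Hu Hs Ht E.
  destruct (vs_facts G) as [v [Sv [Hspan [Hinj [Hadd Hmul]]]]].
  destruct (Hspan _ (Sp_n G u)) as [al Hal].
  rewrite !(nrm_scal G v u al _ Hmul Hal) in E. apply Hinj in E.
  rewrite !Rabs_pos_eq in E by lra.
  destruct (Req_dec al 0) as [Z|Z].
  - exfalso. apply Hu. apply NZ. rewrite Hal, Z, <- (mul0 G u), ggv7, Hal, Hmul.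
    f_equal. rewrite Rabs_R0. ring.
  - apply (Rmult_eq_reg_r al); auto.
Qed.

Lemma CMP {N} (G : GGV N) (x y : G) : y <> g_e N G ->
  exists t, 0 <= t /\ nrm G x = nrm G (sc t y).
Proof.
  intro Hy.
  destruct (vs_facts G) as [v [Sv [Hspan [Hinj [Hadd Hmul]]]]].
  destruct (Hspan _ (Sp_n G y)) as [al Hal].
  destruct (Hspan _ (Sp_n G x)) as [be Hbe].
  assert (He : nrm G (g_e N G) = g_mulp N G 0 v).
  { rewrite <- (mul0 G y), ggv7, Hal, Hmul. f_equal. rewrite Rabs_R0; ring. }
  assert (al0 : al <> 0).
  { intro Z. apply Hy, NZ. rewrite He, Hal, Z. reflexivity. }
  destruct (Rlt_or_le (be / al) 0) as [Hn|Hp].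
  - exfalso. set (k := - (be / al)).
    assert (Hk : 0 < k) by (unfold k; lra).
    assert (L : nrm G (x ⊕ sc k y) <= nrm G (g_e N G)).
    { eapply Rle_trans; [apply ggv8|].
      rewrite (nrm_scal G v y al _ Hmul Hal), Hbe, Hadd, He.
      rewrite Rabs_pos_eq by lra. right. f_equal. unfold k. field. auto. }
    assert (E : x ⊕ sc k y = g_e N G) by (apply NZ; apply Rle_antisym; [exact L| apply GE]).
    apply rinv_uniq in E. apply (f_equal (fun w => nrm G w)) in E.
    rewrite nrm_inv, (nrm_scal G v y al _ Hmul Hal), Hbe in E. apply Hinj in E.
    rewrite Rabs_pos_eq in E by lra. unfold k in E.
    assert (be = 0).
    { assert (E' : - (be / al) * al = - be) by (field; auto). lra. }
    subst be. unfold Rdiv in Hn. rewrite Rmult_0_l in Hn. lra.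
  - exists (be / al). split; [exact Hp|].
    rewrite (nrm_scal G v y al _ Hmul Hal), Hbe, Rabs_pos_eq by exact Hp.
    f_equal. field. auto.
Qed.
Lemma R1 {N} (G : GGV N) (u x y : G) : gyrometric G (u ⊕ x) (u ⊕ y) = gyrometric G x y.
Proof.
  unfold gyrometric. rewrite <- (LC' G x y) at 1. rewrite (g_gyroassoc N G u x), LC. apply ggv0.
Qed.

Lemma R1' {N} (G : GGV N) (a u x : G) : gyrometric G (a ⊕ u) x = gyrometric G u (⊖a ⊕ x).
Proof. rewrite <- (R1 G a u (⊖a ⊕ x)), LC'. reflexivity. Qed.

Lemma rsym {N} (G : GGV N) (x y : G) : gyrometric G x y = gyrometric G y x.
Proof.
  unfold gyrometric. rewrite <- (nrm_inv G (⊖x ⊕ y)), inv_op, invinv, ggv0. reflexivity.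
Qed.

Lemma rneg {N} (G : GGV N) (x y : G) : gyrometric G (⊖x) (⊖y) = gyrometric G x y.
Proof.
  unfold gyrometric. rewrite <- (nrm_inv G (⊖x ⊕ y)), AIP. reflexivity.
Qed.

Lemma rtri {N} (G : GGV N) (x y z : G) :
  gyrometric G x z <= g_addp N G (gyrometric G x y) (gyrometric G y z).
Proof.
  unfold gyrometric. rewrite <- (LC' G y z) at 1. rewrite g_gyroassoc.
  eapply Rle_trans; [apply ggv8|]. rewrite ggv0. right; reflexivity.
Qed.

Lemma rxx {N} (G : GGV N) (x : G) : gyrometric G x x = nrm G (g_e N G).
Proof. unfold gyrometric. rewrite g_left_inv. reflexivity. Qed.

Lemma rho_e {N} (G : GGV N) (x y : G) : gyrometric G x y = nrm G (g_e N G) -> x = y.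
Proof.
  intro H. apply NZ in H. rewrite <- (LC' G x y), H, rid. reflexivity.
Qed.

Lemma sc_e {N} (G : GGV N) r : sc r (g_e N G) = g_e N G.
Proof.
  rewrite <- (mul0 G (g_e N G)), <- ggv3. rewrite Rmult_0_r. reflexivity.
Qed.

Definition dd {N} (G : GGV N) (a b : G) := sc (1/2) (⊖a ⊕ b).
Definition qq {N} (G : GGV N) (a b : G) := a ⊕ dd G a b.
Definition psi {N} (G : GGV N) (a b x : G) :=
  a ⊕ (dd G a b ⊕ ⊖(⊖ dd G a b ⊕ (⊖a ⊕ x))).

Lemma psi_inv {N} (G : GGV N) (a b x : G) : psi G a b (psi G a b x) = x.
Proof.
  unfold psi. rewrite LC, LC, invinv, LC', LC'. reflexivity.
Qed.

Lemma psi_a {N} (G : GGV N) (a b : G) : psi G a b a = b.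
Proof.
  unfold psi. rewrite g_left_inv, rid, invinv.
  unfold dd. rewrite <- two_mul, half_two, LC'. reflexivity.
Qed.

Lemma psi_b {N} (G : GGV N) (a b : G) : psi G a b b = a.
Proof. rewrite <- (psi_a G a b) at 2. apply psi_inv. Qed.

Lemma psi_q {N} (G : GGV N) (a b : G) : psi G a b (qq G a b) = qq G a b.
Proof. unfold psi, qq. rewrite LC, g_left_inv, inv_e, rid. reflexivity. Qed.

Lemma psi_iso {N} (G : GGV N) (a b x y : G) :
  gyrometric G (psi G a b x) (psi G a b y) = gyrometric G x y.
Proof. unfold psi. rewrite !R1, rneg, !R1. reflexivity. Qed.

Lemma psi_dist {N} (G : GGV N) (a b x : G) :
  gyrometric G (psi G a b x) x = g_mulp N G 2 (gyrometric G (qq G a b) x).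
Proof.
  unfold psi, qq. rewrite R1', R1', R1'.
  set (t := ⊖ dd G a b ⊕ (⊖ a ⊕ x)).
  unfold gyrometric. rewrite invinv, <- two_mul, ggv7, Rabs_pos_eq by lra. reflexivity.
Qed.

Lemma psi_fix {N} (G : GGV N) (a b y : G) : psi G a b y = y -> y = qq G a b.
Proof.
  intro H. pose proof (psi_dist G a b y) as E. rewrite H, rxx in E.
  unfold gyrometric in E. rewrite <- (Rabs_pos_eq 2) in E by lra. rewrite <- ggv7 in E.
  symmetry in E. apply NZ in E.
  apply (f_equal (sc (1/2))) in E. rewrite two_half, sc_e in E.
  rewrite <- (LC' G (qq G a b) y), E, rid. reflexivity.
Qed.
Definition PP {N} (G : GGV N) (a b : G) (t : R) : Prop :=
  0 <= t /\ exists g gi : G -> G,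
    (forall x y, gyrometric G (g x) (g y) = gyrometric G x y) /\
    (forall x, g (gi x) = x) /\ (forall x, gi (g x) = x) /\
    g a = a /\ g b = b /\
    gyrometric G (g (qq G a b)) (qq G a b) = nrm G (sc t (dd G a b)).

Lemma d_ne {N} (G : GGV N) (a b : G) : a <> b -> dd G a b <> g_e N G.
Proof.
  intros Hab H. apply Hab. unfold dd in H. apply (f_equal (sc 2)) in H.
  rewrite half_two, sc_e in H. rewrite <- (LC' G a b), H, rid. reflexivity.
Qed.

Lemma PP_bound {N} (G : GGV N) (a b : G) t : a <> b -> PP G a b t -> t <= 2.
Proof.
  intros Hab [Ht [g [gi [Hiso [H1 [H2 [Ha [Hb Hq]]]]]]]].
  pose proof (rtri G (g (qq G a b)) a (qq G a b)) as T.
  assert (Eq : gyrometric G (g (qq G a b)) a = gyrometric G a (qq G a b)).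
  { transitivity (gyrometric G (g (qq G a b)) (g a)); [rewrite Ha; reflexivity|].
    rewrite Hiso; apply rsym. }
  rewrite Eq in T.
  assert (Hd : gyrometric G a (qq G a b) = nrm G (dd G a b))
    by (unfold qq, gyrometric; rewrite LC; reflexivity).
  rewrite Hd, Hq in T.
  destruct (vs_facts G) as [v [Sv [Hspan [Hinj [Hadd Hmul]]]]].
  destruct (Hspan _ (Sp_n G (dd G a b))) as [al Hal].
  assert (E2 : g_addp N G (nrm G (dd G a b)) (nrm G (dd G a b)) = nrm G (sc 2 (dd G a b))).
  { rewrite (nrm_scal G v _ al _ Hmul Hal), Hal, Hadd, Rabs_pos_eq by lra. f_equal; ring. }
  rewrite E2 in T.
  destruct (Rle_or_lt t 2) as [|Hlt]; [assumption|exfalso].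
  assert (M : nrm G (sc 2 (dd G a b)) <= nrm G (sc t (dd G a b))) by (apply MONO; lra).
  assert (E : nrm G (sc 2 (dd G a b)) = nrm G (sc t (dd G a b))) by lra.
  apply STRICT in E; [lra | apply d_ne; exact Hab | lra | lra].
Qed.

Lemma PP_double {N} (G : GGV N) (a b : G) t : PP G a b t -> PP G a b (2 * t).
Proof.
  intros [Ht [g [gi [Hiso [H1 [H2 [Ha [Hb Hq]]]]]]]].
  split; [lra|].
  set (ps := psi G a b).
  exists (fun x => ps (gi (ps (g x)))), (fun x => gi (ps (g (ps x)))).
  assert (Hgi : forall x y, gyrometric G (gi x) (gi y) = gyrometric G x y).
  { intros x y. rewrite <- Hiso, !H1. reflexivity. }
  assert (Hgib : gi b = b) by (rewrite <- Hb at 1; apply H2).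
  assert (Hgia : gi a = a) by (rewrite <- Ha at 1; apply H2).
  unfold ps; cbv beta. split; [|split; [|split; [|split; [|split]]]].
  - intros x y. rewrite psi_iso, Hgi, psi_iso, Hiso. reflexivity.
  - intro x. rewrite H1, psi_inv, H2, psi_inv. reflexivity.
  - intro x. rewrite psi_inv, H1, psi_inv, H2. reflexivity.
  - rewrite Ha, psi_a, Hgib, psi_b. reflexivity.
  - rewrite Hb, psi_b, Hgia, psi_a. reflexivity.
  - rewrite <- (psi_q G a b) at 2. rewrite psi_iso.
    rewrite <- (H2 (qq G a b)) at 2. rewrite Hgi, psi_dist, rsym, Hq.
    rewrite ggv3, (ggv7 N G 2), Rabs_pos_eq by lra. reflexivity.
Qed.

Lemma pow2_ge k : INR k + 1 <= 2 ^ k.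
Proof.
  induction k as [|k IH]; [simpl; lra|].
  rewrite S_INR. change (2 ^ S k) with (2 * 2 ^ k). pose proof (pos_INR k). lra.
Qed.

Lemma PP_zero {N} (G : GGV N) (a b : G) t : a <> b -> PP G a b t -> t = 0.
Proof.
  intros Hab HP.
  assert (Hk : forall k, PP G a b (2 ^ k * t)).
  { induction k as [|k IH]; simpl. rewrite Rmult_1_l; exact HP.
    rewrite Rmult_assoc. apply PP_double. exact IH. }
  destruct HP as [Ht _].
  destruct (Rle_lt_or_eq_dec 0 t Ht) as [Hp|]; [exfalso|auto].
  destruct (archimed_cor1 (t / 2) ltac:(lra)) as [k [Hk1 Hk2]].
  pose proof (PP_bound G a b _ Hab (Hk k)) as B.
  pose proof (pow2_ge k) as P.
  assert (Ik : 0 < INR k) by (apply lt_0_INR; exact Hk2).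
  assert (2 < INR k * t).
  { apply (Rmult_lt_compat_l (INR k)) in Hk1; [|exact Ik].
    rewrite Rinv_r in Hk1 by lra. lra. }
  assert (INR k * t <= 2 ^ k * t) by (apply Rmult_le_compat_r; lra).
  lra.
Qed.
Theorem theorem13 (N1 N2 : NormedSpace) (G1 : GGV N1) (G2 : GGV N2)
  (T : G1 -> G2)
  (T_surj : forall y : G2, exists x : G1, T x = y)
  (T_iso : forall a b : G1, gyrometric G2 (T a) (T b) = gyrometric G1 a b) :
  forall a b : G1, gyromidpoint G2 (T a) (T b) = T (gyromidpoint G1 a b).
Proof.
  intros a b. rewrite !midpoint_eq.
  change (qq G2 (T a) (T b) = T (qq G1 a b)).
  destruct (classic (a = b)) as [Eab|Hab].
  { subst b. unfold qq, dd. rewrite !g_left_inv, !sc_e, !rid. reflexivity. }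
  set (Tinv := fun y => proj1_sig (constructive_indefinite_description _ (T_surj y))).
  assert (TT : forall y, T (Tinv y) = y).
  { intro y. unfold Tinv. destruct (constructive_indefinite_description _ (T_surj y)); auto. }
  assert (Tinj : forall x y, T x = T y -> x = y).
  { intros x y E. apply rho_e. rewrite <- T_iso, E, rxx, <- (rxx G1 x), <- T_iso, rxx.
    reflexivity. }
  assert (TiT : forall x, Tinv (T x) = x) by (intro x; apply Tinj; apply TT).
  set (p1 := psi G1 a b). set (p2 := psi G2 (T a) (T b)).
  set (g := fun x => p1 (Tinv (p2 (T x)))).
  set (gi := fun x => Tinv (p2 (T (p1 x)))).
  destruct (CMP G1 (⊖ (g (qq G1 a b)) ⊕ qq G1 a b) (dd G1 a b) (d_ne G1 a b Hab)) as [t [Ht Et]].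
  assert (HP : PP G1 a b t).
  { split; [exact Ht|]. exists g, gi. unfold g, gi, p1, p2; cbv beta.
    split; [|split; [|split; [|split; [|split]]]].
    - intros x y. rewrite psi_iso, <- T_iso, !TT, psi_iso, T_iso. reflexivity.
    - intro x. rewrite TT, psi_inv, TiT, psi_inv. reflexivity.
    - intro x. rewrite psi_inv, TT, psi_inv, TiT. reflexivity.
    - rewrite psi_a, TiT, psi_b. reflexivity.
    - rewrite psi_b, TiT, psi_a. reflexivity.
    - exact Et. }
  pose proof (PP_zero G1 a b t Hab HP) as t0. subst t.
  rewrite mul0 in Et. apply rho_e in Et.
  unfold g, p1 in Et. apply (f_equal (psi G1 a b)) in Et.
  rewrite psi_inv, psi_q in Et. apply (f_equal T) in Et. rewrite TT in Et.
  symmetry. apply psi_fix. exact Et.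
Qed.
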